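(* Let $\lambda\in[0,1]$ and $\alpha\ge1$, and let $\mathcal O$ be any online algorithm for the fractional online knapsack program below that, on every instance, outputs a feasible solution $y^{\mathcal O}$ with $\sum_i y^{\mathcal O}_i\ge \mathsf{OPT}/\alpha$. Then Algorithm 1 run with $\mathcal O$, advice $y'\in\mathbb{R}^m_{\ge0}$, $\lambda$ and $\beta=1$ outputs $\bar y$ with $\sum_{i=1}^m \frac{w_i}{v_i}\bar y_i\le (2-\lambda)C$ and $\sum_i\bar y_i\ge \frac{\lambda}{\alpha}\mathsf{OPT}$; and if the advice is feasible, i.e. $\sum_i \frac{w_i}{v_i}y'_i\le C$, then also $\sum_i\bar y_i\ge(1-\lambda)\sum_i y'_i$.
   Context: Online knapsack program: items $i=1,\dots,m$ arrive online, item $i$ having value $v_i>0$ and weight $w_i>0$; with capacity $C>0$ known in advance, maximize $\sum_{i=1}^m y_i$ over $y\in\mathbb{R}^m_{\ge0}$ subject to $\sum_{i=1}^m \frac{w_i}{v_i}y_i\le C$, where $y_i$ must be irrevocably fixed when item $i$ arrives. $\mathsf{OPT}$ is the optimal offline value. Algorithm 1: run $\mathcal O$ in parallel; in round $i$ obtain $y_i^{\mathcal O}$; if $\sum_{k\le i}\frac{w_k}{v_k}y'_k\le \beta C$ set $y_i=\lambda y^{\mathcal O}_i+(1-\lambda)y'_i$, otherwise set $y_i=y_i^{\mathcal O}$. *)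

(* Defs.v *)
From HB Require Import structures.
From mathcomp Require Import all_boot all_order all_algebra.
From mathcomp Require Import classical_sets reals.
Set Implicit Arguments. Unset Strict Implicit. Unset Printing Implicit Defensive.
Import Order.TTheory GRing.Theory Num.Theory.
Local Open Scope ring_scope.
Local Open Scope classical_set_scope.

Section Knapsack.
Variable R : realType.

Definition item := (R * R)%type.
Definition val (it : item) : R := it.1.
Definition wgt (it : item) : R := it.2.

Definition valid_items (s : seq item) : Prop :=
  forall i, (i < size s)%N -> 0 < val (nth (0,0) s i) /\ 0 < wgt (nth (0,0) s i).

Definition kcost (s : seq item) (y : nat -> R) : R :=
  \sum_(i < size s) (wgt (nth (0,0) s i) / val (nth (0,0) s i)) * y i.

Definition ktotal (s : seq item) (y : nat -> R) : R := \sum_(i < size s) y i.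

Definition feasible (C : R) (s : seq item) (y : nat -> R) : Prop :=
  (forall i, (i < size s)%N -> 0 <= y i) /\ kcost s y <= C.

Definition OPT (C : R) (s : seq item) : R :=
  sup [set ktotal s y | y in [set y | feasible C s y]].

(* A deterministic online algorithm: given the (known in advance) capacity and
   the prefix of items that have arrived so far (the last one being the current
   item), it irrevocably fixes the value for the current item. *)
Definition online_alg := R -> seq item -> R.

Definition run (O : online_alg) (C : R) (s : seq item) : nat -> R :=
  fun i => O C (take i.+1 s).

Definition competitive (O : online_alg) (alpha : R) : Prop :=
  forall (C : R) (s : seq item), 0 < C -> valid_items s ->
    feasible C s (run O C s) /\ OPT C s / alpha <= ktotal s (run O C s).

Definition alg1 (O : online_alg) (y' : nat -> R) (lambda beta C : R)
    (s : seq item) : nat -> R :=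
  fun i =>
    if \sum_(k < i.+1) (wgt (nth (0,0) s k) / val (nth (0,0) s k)) * y' k
       <= beta * C
    then lambda * run O C s i + (1 - lambda) * y' i
    else run O C s i.

End Knapsack.

(* Main.v *)
Require Import Defs.
From HB Require Import structures.
From mathcomp Require Import all_boot all_order all_algebra.
From mathcomp Require Import classical_sets reals.
From mathcomp Require Import lra.
Import Order.TTheory GRing.Theory Num.Theory.
Local Open Scope ring_scope.

Theorem mainTheorem2 (R : realType) (lambda alpha : R) (O : online_alg R)
  (hl0 : 0 <= lambda) (hl1 : lambda <= 1) (ha : 1 <= alpha)
  (hO : competitive O alpha)
  (C : R) (s : seq (item R)) (y' : nat -> R)
  (hC : 0 < C) (hs : valid_items s)
  (hy' : forall i, (i < size s)%N -> 0 <= y' i) :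
  kcost s (alg1 O y' lambda 1 C s) <= (2 - lambda) * C /\
  lambda / alpha * OPT C s <= ktotal s (alg1 O y' lambda 1 C s) /\
  (kcost s y' <= C ->
     (1 - lambda) * ktotal s y' <= ktotal s (alg1 O y' lambda 1 C s)).
Proof.
have [[yO0 kO] compO] := hO C s hC hs.
set yO := run O C s in yO0 kO compO.
set c := fun i => Defs.wgt (nth (0,0) s i) / Defs.val (nth (0,0) s i).
have cpos : forall i, (i < size s)%N -> 0 < c i.
  by move=> i hi; have [h1 h2] := hs i hi; rewrite /c divr_gt0.
set Q := fun n => \sum_(0 <= k < n) c k * y' k.
have algE : forall i, alg1 O y' lambda 1 C s i =
   if Q i.+1 <= C then lambda * yO i + (1 - lambda) * y' i else yO i.
  by move=> i; rewrite /alg1 mul1r /Q big_mkord.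
have hl1' : 0 <= 1 - lambda by rewrite subr_ge0.
set ybar := alg1 O y' lambda 1 C s.
have Qmono : forall n m, (n <= m)%N -> (m <= size s)%N -> Q n <= Q m.
  move=> n m hnm hm; rewrite /Q (big_cat_nat (leq0n n) hnm) /= lerDl.
  rewrite big_nat_cond; apply: sumr_ge0 => k /andP[/andP[_ hk] _].
  have hks : (k < size s)%N by apply: leq_trans hk hm.
  by apply: mulr_ge0; [apply: ltW; apply: cpos|apply: hy'].
split.
  have key : forall n, (n <= size s)%N ->
    \sum_(0 <= i < n) (if Q i.+1 <= C then c i * y' i else 0) <= C /\
    \sum_(0 <= i < n) (if Q i.+1 <= C then c i * y' i else 0) <= Q n.
    elim=> [|n IH] hn; first by rewrite /Q !big_geq // ltW.
    have [IH1 IH2] := IH (ltnW hn).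
    rewrite big_nat_recr //=.
    case: ifP => hQ.
      have e : Q n.+1 = Q n + c n * y' n by rewrite /Q big_nat_recr.
      by split; [apply: le_trans hQ|]; rewrite e lerD2r.
    rewrite addr0; split => //; apply: le_trans IH2 _; apply: Qmono => //.
  have [k1 _] := key _ (leqnn (size s)).
  have pt : forall i, (i < size s)%N -> c i * ybar i <=
      c i * yO i + (1 - lambda) * (if Q i.+1 <= C then c i * y' i else 0).
    move=> i hi; have ci := cpos i hi; have yi := hy' i hi; have oi := yO0 i hi.
    rewrite /ybar algE; case: ifP => _; last by rewrite mulr0 addr0.
    have h := mulr_ge0 (mulr_ge0 (ltW ci) oi) hl1'; nra.
  apply: le_trans (_ : kcost s yO + (1 - lambda) *
      \sum_(0 <= i < size s) (if Q i.+1 <= C then c i * y' i else 0) <= _).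
    rewrite /kcost big_mkord mulr_sumr -big_split /=.
    by apply: ler_sum => i _; apply: pt.
  have := ler_wpM2l hl1' k1; lra.
split.
  have pt : forall i, (i < size s)%N -> lambda * yO i <= ybar i.
    move=> i hi; have yi := hy' i hi; have oi := yO0 i hi.
    rewrite /ybar algE; case: ifP => _; nra.
  apply: le_trans (_ : lambda * ktotal s yO <= _).
    rewrite mulrAC -mulrA; exact: ler_wpM2l.
  rewrite /ktotal mulr_sumr; apply: ler_sum => i _; exact: pt.
move=> hk.
have pt : forall i, (i < size s)%N -> (1 - lambda) * y' i <= ybar i.
  move=> i hi; have yi := hy' i hi; have oi := yO0 i hi.
  rewrite /ybar algE ifT; first nra.
  apply: le_trans (_ : Q (size s) <= _); first exact: Qmono.
  by rewrite /Q big_mkord.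
rewrite /ktotal mulr_sumr; apply: ler_sum => i _; exact: pt.
Qed.
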